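(* Let $C:=-2.15$ and let $g:\mathbb{R}\to\mathbb{R}$ be $$g(z):=\exp\big(z^3+(-2-3C)z^2+(3C^2+4C)z+\ln 2\big)-1 .$$ For $W=[w_1,w_2,w_3]$ with $w_1,w_2,w_3\in\mathbb{R}^3$, define $f(\cdot;W):\mathbb{R}^3\to\mathbb{R}^3$ by $f(x;W):=[g(\langle w_1,x\rangle),g(\langle w_2,x\rangle),g(\langle w_3,x\rangle)]^\top$. Then there exists such a $W$ for which $f(\cdot;W)$ has two distinct fixed points $p_1,p_2\in\mathbb{R}^3$ such that for each $i\in\{1,2\}$ there exist constants $\epsilon_i>0$, $c_i>0$ and $K_i\in[0,1)$ with the following property: for every initial point $x^{(0)}\in[p_{i,1}-\epsilon_i,p_{i,1}+\epsilon_i]\times\{1\}\times\{1\}$, the fixed-point iteration $x^{(t)}=f(x^{(t-1)};W)$ ($t\ge1$) converges to $p_i$, and for every $t\ge2$, $$\|x^{(t)}-p_i\|_\infty\le K_i^t\cdot c_i\epsilon_i .$$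
   Context: $p_{i,1}$ denotes the first coordinate of $p_i$; $\|\cdot\|_\infty$ is the $\ell_\infty$ norm. A fixed point of $F$ is a point $p$ with $F(p)=p$. *)

(* Defs.v *)
From Stdlib Require Export Reals Lra.
Open Scope R_scope.

Definition vec3 : Type := (R * R * R)%type.
Definition v1 (v : vec3) : R := fst (fst v).
Definition v2 (v : vec3) : R := snd (fst v).
Definition v3 (v : vec3) : R := snd v.

Definition dot3 (u v : vec3) : R := v1 u * v1 v + v2 u * v2 v + v3 u * v3 v.
Definition sub3 (u v : vec3) : vec3 := (v1 u - v1 v, v2 u - v2 v, v3 u - v3 v).
Definition norm_inf3 (v : vec3) : R := Rmax (Rabs (v1 v)) (Rmax (Rabs (v2 v)) (Rabs (v3 v))).

Definition Cst : R := - (215 / 100).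

Definition g (z : R) : R :=
  exp (z ^ 3 + (-2 - 3 * Cst) * z ^ 2 + (3 * Cst ^ 2 + 4 * Cst) * z + ln 2) - 1.

Definition mat3 : Type := (vec3 * vec3 * vec3)%type.

Definition fW (W : mat3) (x : vec3) : vec3 :=
  (g (dot3 (fst (fst W)) x), g (dot3 (snd (fst W)) x), g (dot3 (snd W) x)).

Definition iterate (W : mat3) (x0 : vec3) (t : nat) : vec3 := Nat.iter t (fW W) x0.

Definition cv3 (x : nat -> vec3) (p : vec3) : Prop :=
  Un_cv (fun t => norm_inf3 (sub3 (x t) p)) 0.

Definition local_lin_conv (W : mat3) (p : vec3) : Prop :=
  exists eps c K : R, 0 < eps /\ 0 < c /\ 0 <= K < 1 /\
    forall a : R, v1 p - eps <= a <= v1 p + eps ->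
      let x0 : vec3 := (a, 1, 1) in
      cv3 (iterate W x0) p /\
      forall t : nat, (2 <= t)%nat ->
        norm_inf3 (sub3 (iterate W x0 t) p) <= K ^ t * c * eps.

(* Main.v *)
Require Import Defs.
From Stdlib Require Import Reals Lra Psatz.
Open Scope R_scope.

Definition P (z : R) : R := z ^ 3 + (-2 - 3 * Cst) * z ^ 2 + (3 * Cst ^ 2 + 4 * Cst) * z.

Lemma g_eq z : g z = 2 * exp (P z) - 1.
Proof. unfold g, P. rewrite exp_plus, exp_ln by lra. ring. Qed.

Definition z1 : R := Cst.
Definition z2 : R := Cst + 4/3.

Lemma P1 : P z1 = -5547/8000.
Proof. unfold P, z1, Cst. field. Qed.
Lemma P2 : P z2 = -405769/216000.
Proof. unfold P, z2, Cst. field. Qed.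

Lemma expm1_bound u : Rabs u <= 1/2 -> Rabs (exp u - 1) <= 2 * Rabs u.
Proof.
  intros Hu.
  pose proof (exp_ineq1_le u) as H1. pose proof (exp_ineq1_le (-u)) as H2.
  assert (He : exp u * exp (-u) = 1) by (rewrite <- exp_plus; replace (u + - u) with 0 by ring; apply exp_0).
  pose proof (exp_pos u). pose proof (exp_pos (-u)).
  unfold Rabs in *.
  destruct (Rcase_abs u); destruct (Rcase_abs (exp u - 1)); nra.
Qed.

Lemma expP2_lb : 1/9 <= exp (P z2).
Proof.
  rewrite P2.
  assert (exp (405769/216000) <= 9).
  { assert (exp (405769/216000) <= exp 2).
    { destruct (Req_dec (405769/216000) 2); [lra|]. left; apply exp_increasing; lra. }
    replace 2 with (1+1) in H by ring. rewrite exp_plus in H.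
    pose proof exp_le_3. pose proof (exp_pos 1). nra. }
  assert (He : exp (-405769/216000) * exp (405769/216000) = 1)
    by (rewrite <- exp_plus; replace (-405769/216000 + 405769/216000) with 0 by field; apply exp_0).
  pose proof (exp_pos (405769/216000)). pose proof (exp_pos (-405769/216000)). nra.
Qed.

Lemma gdiff : 2/9 <= g z1 - g z2.
Proof.
  rewrite !g_eq.
  assert (E : exp (P z1) = exp (P z2) * exp (P z1 - P z2))
    by (rewrite <- exp_plus; f_equal; ring).
  pose proof (exp_ineq1_le (P z1 - P z2)).
  pose proof expP2_lb. rewrite P1, P2 in *. nra.
Qed.

Definition al : R := (4/3) / (g z2 - g z1).
Definition bb : R := z1 - al * g z1.

Lemma al_bound : Rabs al <= 6.
Proof.
  pose proof gdiff. unfold al.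
  rewrite Rabs_left.
  - replace (- (4/3 / (g z2 - g z1))) with ((4/3) / (g z1 - g z2)) by (field; lra).
    apply Rmult_le_reg_r with (g z1 - g z2); [lra|].
    unfold Rdiv. rewrite Rmult_assoc, Rinv_l by lra. nra.
  - assert (/(g z2 - g z1) < 0) by (apply Rinv_lt_0_compat; lra). unfold Rdiv. nra.
Qed.

Lemma contr zi s : (forall y, P (zi + y) - P zi = y ^ 2 * (y + s)) -> P zi <= 0 -> Rabs s <= 2 ->
  forall d, Rabs d <= 1/1000 -> Rabs (g (zi + al * d) - g zi) <= 3/10 * Rabs d.
Proof.
  intros Hp Hn Hs d Hd.
  pose proof al_bound as Ha.
  set (y := al * d).
  assert (Hy : Rabs y <= 6 / 1000).
  { unfold y. rewrite Rabs_mult. pose proof (Rabs_pos al). pose proof (Rabs_pos d). nra. }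
  assert (Hy2 : Rabs y <= 6 * Rabs d).
  { unfold y. rewrite Rabs_mult. pose proof (Rabs_pos al). pose proof (Rabs_pos d). nra. }
  set (u := y ^ 2 * (y + s)).
  assert (Hu : Rabs u <= Rabs y ^ 2 * (2 + 6/1000)).
  { unfold u. rewrite Rabs_mult, <- RPow_abs.
    pose proof (Rabs_triang y s). pose proof (pow2_ge_0 (Rabs y)). nra. }
  assert (Hu2 : Rabs u <= 1/2).
  { pose proof (Rabs_pos y). nra. }
  rewrite !g_eq.
  replace (2 * exp (P (zi + y)) - 1 - (2 * exp (P zi) - 1)) with (2 * exp (P zi) * (exp u - 1)).
  2:{ unfold u. rewrite <- Hp. replace (P (zi + y)) with (P zi + (P (zi + y) - P zi)) at 2 by ring.
      rewrite exp_plus. ring. }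
  rewrite !Rabs_mult.
  pose proof (expm1_bound u Hu2).
  assert (Hexp : exp (P zi) <= 1).
  { rewrite <- exp_0. destruct Hn as [Hn|Hn]; [left; apply exp_increasing; lra | rewrite Hn; lra]. }
  rewrite (Rabs_right 2) by lra. rewrite (Rabs_right (exp (P zi))) by (left; apply exp_pos).
  pose proof (exp_pos (P zi)). pose proof (Rabs_pos (exp u - 1)).
  pose proof (Rabs_pos u). pose proof (Rabs_pos y). pose proof (Rabs_pos d).
  assert (Rabs (exp u - 1) <= 2 * (Rabs y ^ 2 * (2 + 6/1000))) by lra.
  assert (Rabs y ^ 2 <= 36 * Rabs d * Rabs d) by nra.
  nra.
Qed.

Lemma contr1 : forall d, Rabs d <= 1/1000 -> Rabs (g (z1 + al * d) - g z1) <= 3/10 * Rabs d.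
Proof.
  apply (contr z1 (-2)).
  - intros y. unfold P, z1. ring.
  - rewrite P1. lra.
  - rewrite Rabs_left by lra. lra.
Qed.

Lemma contr2 : forall d, Rabs d <= 1/1000 -> Rabs (g (z2 + al * d) - g z2) <= 3/10 * Rabs d.
Proof.
  apply (contr z2 2).
  - intros y. unfold P, z2. field.
  - rewrite P2. lra.
  - rewrite Rabs_right by lra. lra.
Qed.

Definition W0 : mat3 := ((al, bb, 0), (0, 0, 0), (0, 0, 0)).
Definition h (x : R) : R := g (al * x + bb).

Lemma g0 : g 0 = 1.
Proof. rewrite g_eq. replace (P 0) with 0 by (unfold P; ring). rewrite exp_0. ring. Qed.

Lemma fW_eq x : fW W0 (x, 1, 1) = (h x, 1, 1).
Proof.
  unfold fW, W0, dot3, v1, v2, v3, h; simpl.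
  replace (al * x + bb * 1 + 0 * 1) with (al * x + bb) by ring.
  replace (0 * x + 0 * 1 + 0 * 1) with 0 by ring. rewrite g0. reflexivity.
Qed.

Lemma iter_eq a t : iterate W0 (a, 1, 1) t = (Nat.iter t h a, 1, 1).
Proof.
  induction t as [|t IH]; [reflexivity|].
  unfold iterate in *. simpl. rewrite IH. apply fW_eq.
Qed.

Lemma norm_eq x y : norm_inf3 (sub3 (x, 1, 1) (y, 1, 1)) = Rabs (x - y).
Proof.
  unfold norm_inf3, sub3, v1, v2, v3; simpl.
  replace (1 - 1) with 0 by ring. rewrite Rabs_R0.
  rewrite (Rmax_left 0 0) by lra. apply Rmax_left. apply Rabs_pos.
Qed.

Lemma llc zi : al * g zi + bb = zi ->
  (forall d, Rabs d <= 1/1000 -> Rabs (g (zi + al * d) - g zi) <= 3/10 * Rabs d) ->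
  local_lin_conv W0 (g zi, 1, 1).
Proof.
  intros Hfix Hc.
  exists (1/1000), 1, (3/10). split; [lra|]. split; [lra|]. split; [lra|].
  intros a Ha x0. unfold x0. unfold v1 in Ha; simpl in Ha.
  assert (Ha' : Rabs (a - g zi) <= 1/1000) by (apply Rabs_le; lra).
  assert (Hb : forall t, Rabs (Nat.iter t h a - g zi) <= (3/10)^t * Rabs (a - g zi)
                         /\ Rabs (Nat.iter t h a - g zi) <= 1/1000).
  { induction t as [|t [IH1 IH2]].
    - simpl. split; lra.
    - simpl. set (x := Nat.iter t h a) in *.
      unfold h. replace (al * x + bb) with (zi + al * (x - g zi)) by lra.
      pose proof (Hc _ IH2). pose proof (Rabs_pos (x - g zi)). split; nra. }
  split.
  - intros e He. destruct (pow_lt_1_zero (3/10)) with (y := e) as [N HN].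
    { rewrite Rabs_right by lra. lra. } { exact He. }
    exists N. intros n Hn. unfold R_dist. rewrite iter_eq, norm_eq.
    rewrite Rminus_0_r, (Rabs_right (Rabs _)) by (apply Rle_ge, Rabs_pos).
    specialize (HN n Hn). destruct (Hb n) as [B1 _].
    rewrite Rabs_right in HN by (left; apply pow_lt; lra).
    pose proof (pow_lt (3/10) n ltac:(lra)). pose proof (Rabs_pos (a - g zi)). nra.
  - intros t _. rewrite iter_eq, norm_eq. destruct (Hb t) as [B1 _].
    pose proof (pow_lt (3/10) t ltac:(lra)). nra.
Qed.

Theorem lemmaC4 :
  exists (W : mat3) (p1 p2 : vec3),
    p1 <> p2 /\ fW W p1 = p1 /\ fW W p2 = p2 /\
    local_lin_conv W p1 /\ local_lin_conv W p2.
Proof.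
  pose proof gdiff as Hd.
  assert (F1 : al * g z1 + bb = z1) by (unfold bb; ring).
  assert (F2 : al * g z2 + bb = z2).
  { unfold bb, al. assert (E : z2 = z1 + 4/3) by (unfold z2, z1; ring). 
    set (A := g z2) in *. set (B := g z1) in *. rewrite E. field. lra. }
  exists W0, (g z1, 1, 1), (g z2, 1, 1).
  split; [intros E; injection E; intros; lra|].
  split; [rewrite fW_eq; unfold h; rewrite F1; reflexivity|].
  split; [rewrite fW_eq; unfold h; rewrite F2; reflexivity|].
  split; [apply llc; [exact F1 | exact contr1]|apply llc; [exact F2 | exact contr2]].
Qed.
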